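(* Let $\mathcal{I}\in\mathrm{Ins}(\Omega,\mathcal{H},\mathcal{K})$ and $\mathcal{J}\in\mathrm{Ins}(\Lambda,\mathcal{H},\mathcal{V})$ be instruments. If $\mathcal{I}\preceq\mathcal{J}$, then $\mathcal{I}$ is compatible with $\mathsf{A}^{\mathcal{J}}$; in particular $\Phi^{\mathcal{I}}$ is compatible with $\mathsf{A}^{\mathcal{J}}$ and $\mathsf{A}^{\mathcal{I}}$ is compatible with $\mathsf{A}^{\mathcal{J}}$.
   Context: All Hilbert spaces are finite-dimensional and complex, and all outcome sets are finite. A POVM $\mathsf{A}\in\mathcal{O}(\Omega,\mathcal{H})$ is a map $x\mapsto \mathsf{A}(x)$ from $\Omega$ to positive operators on $\mathcal{H}$ with $\sum_x \mathsf{A}(x)=I$. An instrument $\mathcal{I}\in\mathrm{Ins}(\Omega,\mathcal{H},\mathcal{K})$ is a family $(\mathcal{I}_x)_{x\in\Omega}$ of completely positive trace-nonincreasing linear maps $\mathcal{L}(\mathcal{H})\to\mathcal{L}(\mathcal{K})$ such that $\Phi^{\mathcal{I}}:=\sum_x\mathcal{I}_x$ is trace preserving (induced channel); its induced POVM $\mathsf{A}^{\mathcal{I}}$ is defined by $\mathrm{tr}[\mathsf{A}^{\mathcal{I}}(x)\varrho]=\mathrm{tr}[\mathcal{I}_x(\varrho)]$. Postprocessing: $\mathcal{I}\preceq\mathcal{J}$ if there exist instruments $\mathcal{R}^{(y)}\in\mathrm{Ins}(\Omega,\mathcal{V},\mathcal{K})$, $y\in\Lambda$, with $\mathcal{I}_x=\sum_{y}\mathcal{R}^{(y)}_x\circ\mathcal{J}_y$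 for all $x$. Two instruments $\mathcal{I}\in\mathrm{Ins}(\Omega,\mathcal{H},\mathcal{K})$, $\mathcal{J}\in\mathrm{Ins}(\Lambda,\mathcal{H},\mathcal{V})$ are compatible if there is $\mathcal{G}\in\mathrm{Ins}(\Omega\times\Lambda,\mathcal{H},\mathcal{K}\otimes\mathcal{V})$ with $\sum_{x}\mathrm{tr}_{\mathcal{K}}[\mathcal{G}_{(x,y)}(\varrho)]=\mathcal{J}_y(\varrho)$ for all $y$ and $\sum_y\mathrm{tr}_{\mathcal{V}}[\mathcal{G}_{(x,y)}(\varrho)]=\mathcal{I}_x(\varrho)$ for all $x$, for all states $\varrho$. A POVM $\mathsf{A}\in\mathcal{O}(\Omega,\mathcal{H})$ is identified with the instrument in $\mathrm{Ins}(\Omega,\mathcal{H},\mathbb{C})$ given by $\varrho\mapsto\mathrm{tr}[\mathsf{A}(x)\varrho]$, and a channel with a one-outcome instrument; compatibility involving POVMs or channels is defined through these identifications. *)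

(* Defs.v *)
(* finite-dimensional complex Hilbert spaces are C^n, operators
   are n x n matrices over a numeric closed field C (instantiated with R[i],
   R : realType, in the theorem). *)
From HB Require Import structures.
From mathcomp Require Import all_boot all_order all_algebra.
From mathcomp Require Import complex mxtens.
From mathcomp Require Import reals.

Set Implicit Arguments.
Unset Strict Implicit.
Unset Printing Implicit Defensive.

Import Order.TTheory GRing.Theory Num.Theory.
Local Open Scope ring_scope.

Section QuantumDefs.
Variable C : numClosedFieldType.

Definition adjv {n} (v : 'cV[C]_n) : 'rV[C]_n := map_mx Num.conj v^T.

Definition psd {n} (A : 'M[C]_n) : Prop :=
  forall v : 'cV[C]_n, 0 <= (adjv v *m A *m v) 0 0.

Definition is_state {n} (rho : 'M[C]_n) : Prop := psd rho /\ \tr rho = 1.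

Definition lin_map {n m} (f : 'M[C]_n -> 'M[C]_m) : Prop :=
  forall (a : C) (X Y : 'M[C]_n), f (a *: X + Y) = a *: f X + f Y.

(* Tensor convention: C^k (x) C^n is C^(k*n) via mxtens_index (a,i). *)
Definition block {k n} (a b : 'I_k) (X : 'M[C]_(k * n)) : 'M[C]_n :=
  \matrix_(i, j) X (mxtens_index (a, i)) (mxtens_index (b, j)).

(* ampliation id_k (x) f *)
Definition ampl {n m} (k : nat) (f : 'M[C]_n -> 'M[C]_m) (X : 'M[C]_(k * n))
  : 'M[C]_(k * m) :=
  \matrix_(p, q) f (block (mxtens_unindex p).1 (mxtens_unindex q).1 X)
                   (mxtens_unindex p).2 (mxtens_unindex q).2.

Arguments ampl {n m} k f X.

Definition completely_positive {n m} (f : 'M[C]_n -> 'M[C]_m) : Prop :=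
  forall (k : nat) (X : 'M[C]_(k * n)), psd X -> psd (ampl k f X).

Definition trace_nonincreasing {n m} (f : 'M[C]_n -> 'M[C]_m) : Prop :=
  forall rho : 'M[C]_n, psd rho -> \tr (f rho) <= \tr rho.

Definition trace_preserving {n m} (f : 'M[C]_n -> 'M[C]_m) : Prop :=
  forall rho : 'M[C]_n, \tr (f rho) = \tr rho.

Definition induced_channel {O : finType} {n m} (I : O -> 'M[C]_n -> 'M[C]_m)
  : 'M[C]_n -> 'M[C]_m := fun rho => \sum_(x : O) I x rho.

Definition is_instrument {O : finType} {n m} (I : O -> 'M[C]_n -> 'M[C]_m)
  : Prop :=
  [/\ forall x, lin_map (I x),
      forall x, completely_positive (I x),
      forall x, trace_nonincreasing (I x)
    & trace_preserving (induced_channel I)].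

Definition is_povm {O : finType} {n} (A : O -> 'M[C]_n) : Prop :=
  (forall x, psd (A x)) /\ \sum_(x : O) A x = 1%:M.

Definition induced_povm {O : finType} {n m} (I : O -> 'M[C]_n -> 'M[C]_m)
  (A : O -> 'M[C]_n) : Prop :=
  forall (x : O) (rho : 'M[C]_n), is_state rho -> \tr (A x *m rho) = \tr (I x rho).

(* a POVM as an instrument with output space C (= C^1) *)
Definition povm_ins {O : finType} {n} (A : O -> 'M[C]_n) : O -> 'M[C]_n -> 'M[C]_1 :=
  fun x rho => (\tr (A x *m rho))%:M.

(* a channel as a one-outcome instrument *)
Definition channel_ins {n m} (Phi : 'M[C]_n -> 'M[C]_m) : unit -> 'M[C]_n -> 'M[C]_m :=
  fun _ => Phi.

Definition postprocessing {O L : finType} {n k v}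
  (I : O -> 'M[C]_n -> 'M[C]_k) (J : L -> 'M[C]_n -> 'M[C]_v) : Prop :=
  exists Rp : L -> O -> 'M[C]_v -> 'M[C]_k,
    (forall y, is_instrument (Rp y)) /\
    (forall (x : O) (rho : 'M[C]_n), I x rho = \sum_(y : L) Rp y x (J y rho)).

Definition ptrace2 {k v} (X : 'M[C]_(k * v)) : 'M[C]_k :=
  \matrix_(i, j) \sum_(b < v) X (mxtens_index (i, b)) (mxtens_index (j, b)).
Definition ptrace1 {k v} (X : 'M[C]_(k * v)) : 'M[C]_v :=
  \matrix_(i, j) \sum_(a < k) X (mxtens_index (a, i)) (mxtens_index (a, j)).

Definition compatible {O L : finType} {n k v}
  (I : O -> 'M[C]_n -> 'M[C]_k) (J : L -> 'M[C]_n -> 'M[C]_v) : Prop :=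
  exists G : (O * L)%type -> 'M[C]_n -> 'M[C]_(k * v),
    [/\ is_instrument G,
        (forall (y : L) (rho : 'M[C]_n), is_state rho ->
           \sum_(x : O) ptrace1 (G (x, y) rho) = J y rho)
      & (forall (x : O) (rho : 'M[C]_n), is_state rho ->
           \sum_(y : L) ptrace2 (G (x, y) rho) = I x rho)].

End QuantumDefs.

(* Main.v *)
Require Import Defs.
From HB Require Import structures.
From mathcomp Require Import all_boot all_order all_algebra.
From mathcomp Require Import complex mxtens.
From mathcomp Require Import reals.
Import Order.TTheory GRing.Theory Num.Theory.
Local Open Scope ring_scope.
Set Implicit Arguments.
Section S.
Variable C : numClosedFieldType.
Lemma conj_sum (I : finType) (P : pred I) (F : I -> C) :
  Num.conj (\sum_(i | P i) F i) = \sum_(i | P i) Num.conj (F i).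
Proof. by rewrite rmorph_sum. Qed.
Lemma quad (n : nat) (v : 'cV[C]_n) (A : 'M[C]_n) :
  (adjv v *m A *m v) 0 0 = \sum_p \sum_q Num.conj (v p 0) * A p q * v q 0.
Proof.
rewrite mxE exchange_big /=; apply: eq_bigr => q _.
rewrite !mxE mulr_suml; apply: eq_bigr => p _; by rewrite !mxE.
Qed.
Lemma psd_reindex N M (s : 'I_N -> 'I_M) (X : 'M[C]_M) :
  psd X -> psd (\matrix_(p, q) X (s p) (s q)).
Proof.
move=> HX v.
pose w : 'cV[C]_M := \col_m \sum_(p | s p == m) v p 0.
have := HX w; rewrite !quad.
have -> : \sum_p \sum_q Num.conj (v p 0) * (\matrix_(p, q) X (s p) (s q)) p q * v q 0
  = \sum_m \sum_(p | s p == m) \sum_m' \sum_(q | s q == m') Num.conj (v p 0) * X m m' * v q 0.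
  rewrite (partition_big s xpredT) //; apply: eq_bigr => m _.
  apply: eq_bigr => p /andP[_ /eqP Hp].
  rewrite (partition_big s xpredT) //; apply: eq_bigr => m' _.
  apply: eq_bigr => q /andP[_ /eqP Hq]; by rewrite mxE Hp Hq.
suff -> : \sum_m \sum_(p | s p == m) \sum_m' \sum_(q | s q == m') Num.conj (v p 0) * X m m' * v q 0
  = \sum_m \sum_m' Num.conj (w m 0) * X m m' * w m' 0 by [].
apply: eq_bigr => m _; rewrite exchange_big; apply: eq_bigr => m' _.
rewrite !mxE conj_sum !mulr_suml; apply: eq_bigr => p _; by rewrite mulr_sumr.
Qed.
Lemma psd_sum (T : finType) n (F : T -> 'M[C]_n) :
  (forall i, psd (F i)) -> psd (\sum_i F i).
Proof.
move=> H v; rewrite mulmx_sumr mulmx_suml summxE; apply: sumr_ge0 => i _; exact: H.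
Qed.
Definition rsum {n m} {T : finType} (s : T -> 'I_m -> 'I_n) (Y : 'M[C]_n) : 'M[C]_m :=
  \matrix_(p, q) \sum_i Y (s i p) (s i q).
Lemma psd_rsum n m (T : finType) (s : T -> 'I_m -> 'I_n) Y : psd Y -> psd (rsum s Y).
Proof.
move=> HY; have -> : rsum s Y = \sum_i \matrix_(p, q) Y (s i p) (s i q).
  by apply/matrixP => p q; rewrite !mxE summxE; apply: eq_bigr => i _; rewrite mxE.
apply: psd_sum => i; exact: psd_reindex.
Qed.
Lemma cp_rsum n m (T : finType) (s : T -> 'I_m -> 'I_n) : completely_positive (rsum s).
Proof.
move=> K X HX.
have -> : @ampl _ _ _ K (rsum s) X = rsum (fun i p => mxtens_index ((mxtens_unindex p).1, s i (mxtens_unindex p).2)) X.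
  by apply/matrixP => p q; rewrite !mxE; apply: eq_bigr => i _; rewrite mxE.
exact: psd_rsum.
Qed.
Lemma lin_rsum n m (T : finType) (s : T -> 'I_m -> 'I_n) : lin_map (rsum s).
Proof.
move=> a X Y; apply/matrixP => p q; rewrite !mxE mulr_sumr -big_split /=.
by apply: eq_bigr => i _; rewrite !mxE.
Qed.
Lemma block_ampl K n m (g : 'M[C]_n -> 'M[C]_m) (X : 'M[C]_(K * n)) a b :
  block a b (@ampl _ _ _ K g X) = g (block a b X).
Proof. by apply/matrixP => i j; rewrite !mxE !mxtens_indexK. Qed.
Lemma cp_comp n m l (f : 'M[C]_m -> 'M[C]_l) (g : 'M[C]_n -> 'M[C]_m) :
  completely_positive f -> completely_positive g -> completely_positive (f \o g).
Proof.
move=> Hf Hg K X HX.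
have -> : @ampl _ _ _ K (f \o g) X = @ampl _ _ _ K f (@ampl _ _ _ K g X).
  by apply/matrixP => p q; rewrite !mxE block_ampl.
exact/Hf/Hg.
Qed.
Lemma cp_sum (T : finType) n m (f : T -> 'M[C]_n -> 'M[C]_m) :
  (forall i, completely_positive (f i)) -> completely_positive (fun X => \sum_i f i X).
Proof.
move=> Hf K X HX.
have -> : @ampl _ _ _ K (fun X => \sum_i f i X) X = \sum_i @ampl _ _ _ K (f i) X.
  by apply/matrixP => p q; rewrite mxE !summxE; apply: eq_bigr => i _; rewrite mxE.
apply: psd_sum => i; exact: Hf.
Qed.
Lemma lin_comp n m l (f : 'M[C]_m -> 'M[C]_l) (g : 'M[C]_n -> 'M[C]_m) :
  lin_map f -> lin_map g -> lin_map (f \o g).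
Proof. by move=> Hf Hg a X Y /=; rewrite Hg Hf. Qed.
Lemma lin_sum (T : finType) n m (f : T -> 'M[C]_n -> 'M[C]_m) :
  (forall i, lin_map (f i)) -> lin_map (fun X => \sum_i f i X).
Proof.
move=> Hf a X Y; rewrite scaler_sumr -big_split /=; apply: eq_bigr => i _; exact: Hf.
Qed.
Lemma cp_pos n m (f : 'M[C]_n -> 'M[C]_m) X :
  completely_positive f -> psd X -> psd (f X).
Proof.
move=> Hf HX.
pose X' : 'M[C]_(1 * n) := \matrix_(p, q) X (mxtens_unindex p).2 (mxtens_unindex q).2.
have HX' : psd X' by exact: psd_reindex.
have Hb : forall a b, block a b X' = X.
  by move=> a b; apply/matrixP => i j; rewrite !mxE !mxtens_indexK.
have -> : f X = \matrix_(i, j) (@ampl _ _ _ 1 f X') (mxtens_index (ord0, i)) (mxtens_index (ord0, j)).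
  by apply/matrixP => i j; rewrite !mxE Hb !mxtens_indexK.
exact/psd_reindex/Hf.
Qed.
Definition emb {k} : 'M[C]_k -> 'M[C]_(k * 1) :=
  rsum (T := 'I_1) (fun _ p => (mxtens_unindex p).1).
Definition tr1 {k} : 'M[C]_k -> 'M[C]_(1 * 1) :=
  rsum (T := 'I_k) (fun i _ => i).
Lemma tr_emb k (Y : 'M[C]_k) : \tr (emb Y) = \tr Y.
Proof.
rewrite /mxtrace.
transitivity (\sum_(p : 'I_k * 'I_1) Y p.1 p.1).
  rewrite (reindex (@mxtens_index k 1)) /=; last first.
    by exists (@mxtens_unindex k 1) => p _; rewrite (mxtens_indexK, mxtens_unindexK).
  by apply: eq_bigr => p _; rewrite mxE big_ord1 mxtens_indexK.
rewrite -(pair_bigA _ (fun i (j : 'I_1) => Y i i)) /=.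
by apply: eq_bigr => i _; rewrite big_ord1.
Qed.
Lemma ptrace2_emb k (Y : 'M[C]_k) : ptrace2 (emb Y) = Y.
Proof.
by apply/matrixP => i j; rewrite mxE big_ord1 mxE big_ord1 !mxtens_indexK.
Qed.
Lemma ptrace1_emb k (Y : 'M[C]_k) : ptrace1 (emb Y) = (\tr Y)%:M.
Proof.
apply/matrixP => i j; rewrite !ord1 !mxE eqxx mulr1n.
by apply: eq_bigr => a _; rewrite mxE big_ord1 !mxtens_indexK.
Qed.
Lemma tr_tr1 k (Y : 'M[C]_k) : \tr (tr1 Y) = \tr Y.
Proof. by rewrite /mxtrace big_ord1 mxE. Qed.
Lemma ptrace1_tr1 k (Y : 'M[C]_k) : ptrace1 (tr1 Y) = (\tr Y)%:M.
Proof. by apply/matrixP => i j; rewrite !ord1 !mxE eqxx mulr1n big_ord1 mxE. Qed.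
Lemma ptrace2_tr1 k (Y : 'M[C]_k) : ptrace2 (tr1 Y) = (\tr Y)%:M.
Proof. by apply/matrixP => i j; rewrite !ord1 !mxE eqxx mulr1n big_ord1 mxE. Qed.
Lemma tr_sum (T : finType) k (F : T -> 'M[C]_k) : \tr (\sum_i F i) = \sum_i \tr (F i).
Proof. exact: raddf_sum. Qed.
Lemma scal_sum (T : finType) (F : T -> C) : (\sum_i F i)%:M = \sum_i (F i)%:M :> 'M[C]_1.
Proof. exact: raddf_sum. Qed.
Lemma compat_gen (O L : finType) n v a k (J : L -> 'M[C]_n -> 'M[C]_v) (AJ : L -> 'M[C]_n)
  (Hm : O -> L -> 'M[C]_n -> 'M[C]_k) (P : 'M[C]_k -> 'M[C]_(a * 1)) (Ix : O -> 'M[C]_n -> 'M[C]_a) :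
  is_instrument J -> induced_povm J AJ ->
  lin_map P -> completely_positive P -> (forall Y, \tr (P Y) = \tr Y) ->
  (forall Y, ptrace1 (P Y) = (\tr Y)%:M) ->
  (forall o y, lin_map (Hm o y)) -> (forall o y, completely_positive (Hm o y)) ->
  (forall o y rho, psd rho -> \tr (Hm o y rho) <= \tr rho) ->
  (forall y rho, \sum_o \tr (Hm o y rho) = \tr (J y rho)) ->
  (forall o rho, is_state rho -> \sum_y ptrace2 (P (Hm o y rho)) = Ix o rho) ->
  compatible Ix (povm_ins AJ).
Proof.
move=> [_ _ _ HJtp] HAJ HPl HPc HPt HP1 HHl HHc HHt HHs HIx.
exists (fun oy rho => P (Hm oy.1 oy.2 rho)); split.
- split.
  + move=> [o y]; exact (lin_comp HPl (HHl o y)).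
  + move=> [o y]; exact (cp_comp HPc (HHc o y)).
  + move=> [o y] rho Hr /=; rewrite HPt; exact: HHt.
  + move=> rho; rewrite /induced_channel tr_sum.
    under eq_bigr do rewrite HPt.
    rewrite -(pair_bigA _ (fun o y => \tr (Hm o y rho))) exchange_big /=.
    under eq_bigr do rewrite HHs.
    by rewrite -tr_sum HJtp.
- move=> y rho Hs /=; under eq_bigr do rewrite HP1.
  by rewrite -scal_sum HHs /povm_ins HAJ.
- move=> o rho Hs /=; exact: HIx.
Qed.
End S.

Theorem proposition5 (R : realType) (Om La : finType) (n k v : nat)
  (I : Om -> 'M[R[i]]_n -> 'M[R[i]]_k) (J : La -> 'M[R[i]]_n -> 'M[R[i]]_v) :
  is_instrument I -> is_instrument J -> postprocessing I J ->
  forall AJ : La -> 'M[R[i]]_n, induced_povm J AJ ->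
    [/\ compatible I (povm_ins AJ),
        compatible (channel_ins (induced_channel I)) (povm_ins AJ)
      & forall AI : Om -> 'M[R[i]]_n, induced_povm I AI ->
          compatible (povm_ins AI) (povm_ins AJ)].
Proof.
move=> HI HJ [Rp [HR HIJ]] AJ HAJ.
have [HJl HJc HJt HJtp] := HJ.
pose Gf := fun (x : Om) (y : La) rho => Rp y x (J y rho).
have Gl : forall x y, lin_map (Gf x y).
  move=> x y; have [Hl _ _ _] := HR y; exact (lin_comp (Hl x) (HJl y)).
have Gc : forall x y, completely_positive (Gf x y).
  move=> x y; have [_ Hc _ _] := HR y; exact (cp_comp (Hc x) (HJc y)).
have Gt : forall x y rho, psd rho -> \tr (Gf x y rho) <= \tr rho.
  move=> x y rho Hr; have [_ _ Ht _] := HR y.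
  apply: le_trans (HJt y rho Hr); apply: Ht; exact: cp_pos (HJc y) Hr.
have Gs : forall y rho, \sum_x \tr (Gf x y rho) = \tr (J y rho).
  move=> y rho; have [_ _ _ Htp] := HR y; by rewrite -tr_sum; apply: Htp.
have GI : forall x rho, \sum_y Gf x y rho = I x rho by move=> x rho; rewrite HIJ.
split.
- have := (@compat_gen _ _ _ _ _ _ _ J AJ Gf (@emb _ k) I HJ HAJ).
  move=> X; apply: X => //.
  + exact: lin_rsum.
  + exact: cp_rsum.
  + exact: tr_emb.
  + exact: ptrace1_emb.
  + move=> x rho _; under eq_bigr do rewrite ptrace2_emb; exact: GI.
- apply: (@compat_gen _ _ _ _ _ _ _ J AJ (fun (u : unit) y rho => \sum_x Gf x y rho) (@emb _ k) _ HJ HAJ) => //.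
  + exact: lin_rsum.
  + exact: cp_rsum.
  + exact: tr_emb.
  + exact: ptrace1_emb.
  + move=> u y; exact: lin_sum.
  + move=> u y; exact: cp_sum.
  + move=> u y rho Hr; rewrite tr_sum Gs; exact: HJt.
  + move=> y rho; rewrite (big_pred1 tt) ?tr_sum ?Gs //; by case.
  + move=> u rho _; under eq_bigr do rewrite ptrace2_emb.
    rewrite exchange_big /channel_ins /induced_channel; apply: eq_bigr => x _; exact: GI.
- move=> AI HAI.
  apply: (@compat_gen _ _ _ _ _ _ _ J AJ (Gf) (@tr1 _ k) _ HJ HAJ) => //.
  + exact: lin_rsum.
  + exact: cp_rsum.
  + exact: tr_tr1.
  + exact: ptrace1_tr1.
  + move=> x rho Hs; under eq_bigr do rewrite ptrace2_tr1.
    by rewrite -scal_sum -tr_sum GI /povm_ins HAI.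
Qed.
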